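(* Let $\Gamma$ be a $\mathbb{Z}^d$-periodic graph with fundamental domain $W$. If an operator on $\Gamma$ has finitely many critical points, then its critical point degree is at least $2^d|W|$.
   Context: A $\mathbb{Z}^d$-periodic graph $\Gamma$ is a simple undirected graph with bounded vertex degrees together with a free action of $\mathbb{Z}^d$ by graph automorphisms, written $(\alpha,v)\mapsto \alpha+v$, having finitely many orbits on vertices and on edges. Write $u\sim v$ if $\{u,v\}$ is an edge. A fundamental domain $W$ is a set of vertices containing exactly one vertex of each $\mathbb{Z}^d$-orbit. An operator on $\Gamma$ is given by $\mathbb{Z}^d$-periodic real-valued functions $e$ on edges (edge weights, $e_{(u,v)}=e_{(v,u)}$) and $V$ on vertices (potential). For $z\in(\mathbb{C}^\times)^d$ and $\alpha\in\mathbb{Z}^d$ put $z^\alpha=z_1^{\alpha_1}\cdots z_d^{\alpha_d}$. The Floquet matrix $H(z)$ is the $W\times W$ matrix whose $(v,u)$ entry is $\delta_{v,u}V(v)-\sum_{\alpha\in\mathbb{Z}^d:\ v\sim \alpha+u} e_{(v,\alpha+u)}z^\alpha$. The dispersion polynomial is $\Phi(z,\lambda)=\det(\lambda I_W-H(z))$. A critical point of the operator is a solution $(z,\lambda)\in(\mathbb{C}^\times)^d\times\mathbb{C}$ of the system (the critical point equations) $\Phi=z_1\frac{\partial\Phi}{\partial z_1}=\cdots=z_d\frac{\partial \Phi}{\partial z_d}=0$. The critical point degree of the operator is the number of critical points counted with multiplicity (as points of the zero-dimensional solution scheme), and is defined to be $0$ if there are infinitely many critical points. *)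

(* Defs.v *)
From HB Require Import structures.
From mathcomp Require Import all_boot all_order all_algebra.
From mathcomp Require Import reals.
From mathcomp Require Import complex.
From mathcomp Require Import mpoly.

Set Implicit Arguments.
Unset Strict Implicit.
Unset Printing Implicit Defensive.

Import Order.TTheory GRing.Theory Num.Theory.
Local Open Scope ring_scope.

(* Z^d-periodic graphs.  Z^d is 'rV[int]_d; the action is
   (alpha, v) |-> act alpha v (written alpha + v in the paper).        *)
Section PeriodicGraph.
Variables (d : nat) (V : Type) (adj : V -> V -> Prop)
          (act : 'rV[int]_d -> V -> V).

Definition periodic_graph : Prop :=
  (forall u v, adj u v -> adj v u) /\
  (forall v, ~ adj v v) /\
  (* bounded vertex degrees: no vertex has D+1 distinct neighbours *)
  (exists D : nat, forall v (f : 'I_D.+1 -> V), (forall k, adj v (f k)) ->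
      exists k1 k2, k1 <> k2 /\ f k1 = f k2) /\
  (forall v, act 0 v = v) /\
  (forall a b v, act (a + b) v = act a (act b v)) /\
  (forall a u v, adj u v <-> adj (act a u) (act a v)) /\
  (forall a v, act a v = v -> a = 0) /\
  (exists m (f : 'I_m -> V), forall v, exists i a, v = act a (f i)) /\
  (* finitely many orbits on (unordered) edges *)
  (exists m (g : 'I_m -> V * V), (forall k, adj (g k).1 (g k).2) /\
     forall u v, adj u v -> exists k a,
       (u = act a (g k).1 /\ v = act a (g k).2) \/
       (u = act a (g k).2 /\ v = act a (g k).1)).

(* W : 'I_n -> V is a fundamental domain: it contains exactly one vertex
   of each orbit; its cardinality |W| is n. *)
Definition fundamental_domain (n : nat) (W : 'I_n -> V) : Prop :=
  (forall v, exists i a, v = act a (W i)) /\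
  (forall i j a b, act a (W i) = act b (W j) -> i = j).

Definition neighbor_enum (n : nat) (W : 'I_n -> V)
    (nb : 'I_n -> 'I_n -> seq 'rV[int]_d) : Prop :=
  forall i j, uniq (nb i j) /\
    forall a, a \in nb i j <-> adj (W i) (act a (W j)).

Definition periodic_operator (R : realType) (e : V -> V -> R) (pot : V -> R)
    : Prop :=
  (forall u v, e u v = e v u) /\
  (forall a u v, e (act a u) (act a v) = e u v) /\
  (forall a v, pot (act a v) = pot v).

End PeriodicGraph.

(* Laurent polynomials in z_1..z_d, lambda are encoded in the polynomial
   ring C[z_1..z_d, w_1..w_d, lambda] (N = 2d+1 variables) modulo the
   relations z_i w_i = 1 (w_i stands for z_i^{-1}).                     *)
Section Floquet.
Variables (R : realType) (d : nat).
Local Notation C := (R[i]).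
Local Notation N := (d + d).+1.
Local Notation P := {mpoly C[N]}.

Definition zv (i : 'I_d) : 'I_N := inord i.
Definition wv (i : 'I_d) : 'I_N := inord (d + i).
Definition lv : 'I_N := inord (d + d).

Definition zmono (a : 'rV[int]_d) : P :=
  \prod_(i < d) (if (0 <= a ord0 i)%R then 'X_(zv i) ^+ `|a ord0 i|%N
                 else 'X_(wv i) ^+ `|a ord0 i|%N).

Definition cst (r : R) : P := ((r%:C)%C)%:MP.

Variables (V : Type) (act : 'rV[int]_d -> V -> V) (n : nat) (W : 'I_n -> V)
          (nb : 'I_n -> 'I_n -> seq 'rV[int]_d) (e : V -> V -> R) (pot : V -> R).

Definition floquet : 'M[P]_n :=
  \matrix_(i, j) ((i == j)%:R * cst (pot (W i))
      - \sum_(a <- nb i j) cst (e (W i) (act a (W j))) * zmono a).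

Definition dispersion : P := \det ((('X_lv : P)%:M) - floquet).

(* the Euler derivation z_i d/dz_i (acting on the Laurent ring) *)
Definition euler (i : 'I_d) (p : P) : P :=
  'X_(zv i) * mderiv (zv i) p - 'X_(wv i) * mderiv (wv i) p.

(* the point (z, z^{-1}, lambda) *)
Definition pt (z : 'rV[C]_d) (l : C) (j : 'I_N) : C :=
  if insub (val j) is Some i then z ord0 i
  else if insub (val j - d)%N is Some i then (z ord0 i)^-1 else l.

Definition critical_point (z : 'rV[C]_d) (l : C) : Prop :=
  (forall i, z ord0 i != 0) /\
  dispersion.@[pt z l] = 0 /\
  (forall i, (euler i dispersion).@[pt z l] = 0).

Definition finitely_many_critical_points : Prop :=
  exists s : seq ('rV[C]_d * C),
    forall z l, critical_point z l -> (z, l) \in s.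

Definition in_critical_ideal (f : P) : Prop :=
  exists (c : P) (a b : 'I_d -> P),
    f = c * dispersion + \sum_(i < d) a i * euler i dispersion
        + \sum_(i < d) b i * ('X_(zv i) * 'X_(wv i) - 1).

(* "critical point degree >= k": the coordinate ring of the (zero-dimensional)
   critical point scheme has C-dimension at least k, i.e. it contains k
   C-linearly independent classes. *)
Definition critical_degree_ge (k : nat) : Prop :=
  exists fs : 'I_k -> P, forall c : 'I_k -> C,
    in_critical_ideal (\sum_(j < k) c j *: fs j) -> forall j, c j = 0.

End Floquet.

(* Main.v *)
Require Import Defs.
From HB Require Import structures.
From mathcomp Require Import all_boot all_order all_algebra.
From mathcomp Require Import reals complex mpoly.
From mathcomp Require Import fingroup perm zify.
Set Implicit Arguments.
Unset Strict Implicit.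
Unset Printing Implicit Defensive.
Import Order.TTheory GRing.Theory Num.Theory.
Local Open Scope ring_scope.

Section Aux.
Variables (R : realType) (d : nat).
Local Notation C := (R[i]).
Local Notation N := (d + d).+1.
Local Notation P := {mpoly C[N]}.

Lemma mmapXU (h : 'I_N -> {poly C}) j : mmap (@polyC C) h ('X_j : P) = h j.
Proof. by rewrite mmapX mmap1U. Qed.

Lemma mderiv_msym (s : 'S_N) j (p : P) :
  mderiv j (msym s p) = msym s (mderiv (s^-1 j)%g p).
Proof.
apply/mpolyP => m; rewrite mcoeff_mderiv !mcoeff_sym mcoeff_mderiv !mnmE permKV.
congr (_ *+ _); congr (mcoeff _ p); apply/mnmP => i; rewrite !mnmE.
congr (_ + _)%N; congr (nat_of_bool _).
by rewrite -{1}(permKV s j) (inj_eq (@perm_inj _ s)).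
Qed.

Lemma mmap_msym (h : 'I_N -> {poly C}) s (p : P) :
  mmap (@polyC C) h (msym s p) = mmap (@polyC C) (fun i => h (s i)) p.
Proof.
elim/mpolyind: p => [|c m p _ _ ih]; first by rewrite msym0 !mmap0.
rewrite msymD (mmapD h (@polyC C)) (mmapD (fun i => h (s i)) (@polyC C)).
suff H : mmap (@polyC C) h (msym s (c *: 'X_[m])) = mmap (@polyC C) (fun i => h (s i)) (c *: 'X_[m]).
  exact: (f_equal2 +%R H ih).
rewrite msymZ (mmapZ h (@polyC C)) (mmapZ (fun i => h (s i)) (@polyC C)) msymX.
rewrite (mmapX h (@polyC C)) (mmapX (fun i => h (s i)) (@polyC C)); congr (_ * _).
rewrite /mmap1 (reindex_inj (@perm_inj _ s)) /=.
by apply: eq_bigr => i _; rewrite mnmE permK.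
Qed.

Definition tf (j : 'I_N) : 'I_N :=
  if (j < d)%N then inord (j + d) else if (j < d + d)%N then inord (j - d) else j.

Lemma tfE (j : 'I_N) : (tf j : nat) =
  if (j < d)%N then (j + d)%N else if (j < d + d)%N then (j - d)%N else (j : nat).
Proof.
have hj := ltn_ord j; rewrite /tf.
case: ifP => h1; first by rewrite /= inordK //; lia.
case: ifP => h2; first by rewrite /= inordK //; lia.
by [].
Qed.

Lemma tfK : involutive tf.
Proof.
move=> j; apply: val_inj; have hj := ltn_ord j.
rewrite /= !tfE.
case: (ltnP j d) => h1.
  rewrite ifF; last lia. rewrite ifT; lia.
case: (ltnP j (d + d)) => h2.
  rewrite ifT; last lia. lia.
rewrite ifF; last lia. rewrite ifF; lia.
Qed.

Definition tau : 'S_N := perm (can_inj tfK).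

Lemma zvE (i : 'I_d) : (zv i : nat) = i.
Proof. have h := ltn_ord i; rewrite /zv inordK //; lia. Qed.
Lemma wvE (i : 'I_d) : (wv i : nat) = (d + i)%N.
Proof. have h := ltn_ord i; rewrite /wv inordK //; lia. Qed.
Lemma lvE : (lv d : nat) = (d + d)%N.
Proof. by rewrite /lv inordK. Qed.

Lemma tau_zv i : tau (zv i) = wv i.
Proof.
apply: val_inj; rewrite /= permE tfE zvE wvE ltn_ord; lia.
Qed.
Lemma tau_wv i : tau (wv i) = zv i.
Proof. by rewrite -tau_zv !permE tfK. Qed.
Lemma tau_lv : tau (lv d) = lv d.
Proof.
apply: val_inj; rewrite /= permE tfE lvE ifF; last lia. by rewrite ifF; lia.
Qed.

Lemma ordN_cases (j : 'I_N) :
  (exists i, j = zv i) \/ (exists i, j = wv i) \/ j = lv d.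
Proof.
have hj := ltn_ord j.
case: (ltnP j d) => h1.
  by left; exists (Ordinal h1); apply: val_inj; rewrite /= zvE.
case: (ltnP j (d + d)) => h2.
  have h3 : (j - d < d)%N by lia.
  right; left; exists (Ordinal h3); apply: val_inj; rewrite /= wvE /=; lia.
right; right; apply: val_inj; rewrite /= lvE; lia.
Qed.


Definition sv (s : {ffun 'I_d -> bool}) (i : 'I_d) : C := if s i then 1 else -1.
Definition hs s (j : 'I_N) : {poly C} :=
  if insub (j : nat) is Some i then (sv s i)%:P
  else if insub (j - d)%N is Some i then (sv s i)%:P else 'X.

Lemma hs_zv s i : hs s (zv i) = (sv s i)%:P.
Proof. by rewrite /hs zvE valK. Qed.
Lemma hs_wv s i : hs s (wv i) = (sv s i)%:P.
Proof.
rewrite /hs wvE insubN; last by rewrite -leqNgt leq_addr.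
by rewrite addKn valK.
Qed.
Lemma hs_lv s : hs s (lv d) = 'X.
Proof.
rewrite /hs lvE insubN; last by rewrite -leqNgt leq_addr.
by rewrite addKn insubN // ltnn.
Qed.
Lemma hs_tau s j : hs s (tau j) = hs s j.
Proof.
case: (ordN_cases j) => [[i ->]|[[i ->]|->]].
- by rewrite tau_zv hs_zv hs_wv.
- by rewrite tau_wv hs_zv hs_wv.
- by rewrite tau_lv.
Qed.

Lemma mmap_eqh (h1 h2 : 'I_N -> {poly C}) (p : P) : h1 =1 h2 ->
  mmap (@polyC C) h1 p = mmap (@polyC C) h2 p.
Proof.
move=> eh; rewrite /mmap; apply: eq_bigr => m _; congr (_ * _).
exact: mmap1_eq.
Qed.

Lemma ev_msym_tau s (p : P) :
  mmap (@polyC C) (hs s) (msym tau p) = mmap (@polyC C) (hs s) p.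
Proof. by rewrite mmap_msym; apply: mmap_eqh => j; rewrite hs_tau. Qed.

Lemma ev_mul s (p q : P) : mmap (@polyC C) (hs s) (p * q) =
   mmap (@polyC C) (hs s) p * mmap (@polyC C) (hs s) q.
Proof. exact: rmorphM. Qed.

End Aux.

Section Graph.
Variables (R : realType) (d : nat) (V : Type) (adj : V -> V -> Prop)
  (act : 'rV[int]_d -> V -> V) (n : nat) (W : 'I_n -> V)
  (nb : 'I_n -> 'I_n -> seq 'rV[int]_d) (e : V -> V -> R) (pot : V -> R).
Local Notation C := (R[i]).
Local Notation N := (d + d).+1.
Local Notation P := {mpoly C[N]}.

Lemma msym_X (s : 'S_N) j : msym s ('X_j : P) = 'X_(s j).
Proof. by rewrite /msym mmapX mmap1U. Qed.

Lemma msym_cst (s : 'S_N) r : msym s (@cst R d r) = @cst R d r.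
Proof. by rewrite /cst /msym mmapC. Qed.

Lemma msym_zmono a : msym (tau d) (zmono R a) = zmono R (- a).
Proof.
rewrite /zmono rmorph_prod; apply: eq_bigr => i _.
rewrite mxE abszN oppr_ge0.
case: ifP => h1; case: ifP => h2; rewrite rmorphXn /= msym_X ?tau_zv ?tau_wv //.
- have -> : a ord0 i = 0 by apply/eqP; rewrite eq_le h1 h2.
  by rewrite !expr0.
- have -> : a ord0 i = 0.
    move/negbT: h1; move/negbT: h2; rewrite -!ltNge => h2 h1.
    by move: (lt_trans h1 h2); rewrite ltxx.
  by rewrite !expr0.
Qed.


Hypothesis hsym : forall u v, adj u v -> adj v u.
Hypothesis hact0 : forall v, act 0 v = v.
Hypothesis hactD : forall a b v, act (a + b) v = act a (act b v).
Hypothesis haut : forall a u v, adj u v <-> adj (act a u) (act a v).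
Hypothesis hnb : neighbor_enum adj act W nb.
Hypothesis hop : periodic_operator act e pot.

Lemma act_cancel a v : act (- a) (act a v) = v.
Proof. by rewrite -hactD addNr hact0. Qed.

Lemma nb_perm i j : perm_eq (nb j i) (map -%R (nb i j)).
Proof.
apply: uniq_perm; first by case: (hnb j i).
  rewrite (map_inj_uniq (@oppr_inj _)); by case: (hnb i j).
move=> b; rewrite -[b in RHS]opprK (mem_map (@oppr_inj _)).
have [_ h1] := hnb j i; have [_ h2] := hnb i j.
apply/idP/idP => H.
- apply/h2; move/h1: H => H; apply: hsym.
  by move/(haut (- b)): H; rewrite act_cancel.
- apply/h1; move/h2: H => H; apply/(haut (- b)).
  by rewrite act_cancel; apply: hsym.
Qed.

Lemma e_flip i j a : e (W j) (act (- a) (W i)) = e (W i) (act a (W j)).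
Proof.
have [hes [hei _]] := hop.
by rewrite -(hei (- a) (W i) (act a (W j))) act_cancel hes.
Qed.

Lemma sum_nb (M : nmodType) (G : 'rV[int]_d -> M) i j :
  \sum_(a <- nb i j) G (- a) = \sum_(b <- nb j i) G b.
Proof. by rewrite (perm_big _ (nb_perm i j)) big_map. Qed.

Local Notation F := (floquet act W nb e pot).

Lemma floquet_tr i j : msym (tau d) (F i j) = F j i.
Proof.
rewrite !mxE rmorphB /= rmorphM /= rmorph_nat msym_cst rmorph_sum /=.
congr (_ - _).
  case: eqP => [->|h]; case: eqP => [h1|h1] //;
    first [by case: h1 | by case: h; rewrite h1 | by rewrite !mul0r].
rewrite -(sum_nb (fun b => cst d (e (W j) (act b (W i))) * zmono R b)).
apply: eq_bigr => a _.
by rewrite rmorphM /= msym_cst msym_zmono e_flip.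
Qed.

Lemma det_sym_aux (M : 'M[P]_n) : (forall i j, msym (tau d) (M i j) = M j i) ->
  msym (tau d) (\det ((('X_(lv d) : P)%:M) - M)) = \det ((('X_(lv d) : P)%:M) - M).
Proof.
move=> hM; rewrite -det_map_mx.
have -> : map_mx (msym (tau d)) ((('X_(lv d) : P)%:M) - M) = ((('X_(lv d) : P)%:M) - M)^T.
  apply/matrixP => i j; rewrite !mxE rmorphB /= rmorphMn /= msym_X tau_lv hM.
  by rewrite eq_sym.
by rewrite det_tr.
Qed.

Lemma dispersion_sym : msym (tau d) (dispersion act W nb e pot) = dispersion act W nb e pot.
Proof. exact: det_sym_aux floquet_tr. Qed.

Local Notation ev s := (mmap (@polyC C) (@hs R d s)).
Local Notation Phi := (dispersion act W nb e pot).

Lemma ev_euler s i : ev s (euler i Phi) = 0.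
Proof.
have H : ev s (mderiv (wv i) Phi) = ev s (mderiv (zv i) Phi).
  rewrite -{1}dispersion_sym mderiv_msym ev_msym_tau.
  by rewrite -(tau_zv i) permK.
rewrite /euler rmorphB /= !rmorphM /= !mmapXU hs_zv hs_wv H.
by rewrite subrr.
Qed.

Definition zval (s : {ffun 'I_d -> bool}) (a : 'rV[int]_d) : C := \prod_(k < d) @sv R d s k ^+ `|a ord0 k|.
Definition M0 (s : {ffun 'I_d -> bool}) : 'M[C]_n := \matrix_(i, j) ((i == j)%:R * ((pot (W i))%:C)%C
   - \sum_(a <- nb i j) ((e (W i) (act a (W j)))%:C)%C * zval s a).

Lemma ev_cst s r : ev s (@cst R d r) = ((r%:C)%C)%:P.
Proof. by rewrite /cst mmapC. Qed.

Lemma ev_zmono s a : ev s (zmono R a) = (zval s a)%:P.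
Proof.
rewrite /zmono /zval rmorph_prod /= rmorph_prod /=; apply: eq_bigr => k _.
case: ifP => _; by rewrite rmorphXn /= mmapXU ?hs_zv ?hs_wv rmorphXn.
Qed.

Lemma ev_disp s : ev s Phi = char_poly (M0 s).
Proof.
rewrite /dispersion /char_poly -det_map_mx; congr (\det _).
apply/matrixP => i j; rewrite !mxE rmorphB /= rmorphMn /= mmapXU hs_lv.
congr (_ - _).
rewrite rmorphB /= rmorphM /= rmorph_nat ev_cst rmorph_sum /=.
rewrite rmorphB /= rmorphM /= rmorph_nat rmorph_sum /=.
congr (_ - _); apply: eq_bigr => a _.
by rewrite rmorphM /= ev_cst ev_zmono rmorphM.
Qed.

Definition delta (s : {ffun 'I_d -> bool}) : P :=
  \prod_(k < d) (((2%:R : C)^-1)%:MP * (1 + ((@sv R d s k)%:MP) * 'X_(zv k))).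

Lemma ev_delta_factor s s' k :
  ev s' (((2%:R : C)^-1)%:MP * (1 + ((@sv R d s k)%:MP) * 'X_(zv k)))
    = (((s k == s' k))%:R)%:P.
Proof.
rewrite rmorphM /= mmapC rmorphD /= rmorph1 rmorphM /= mmapC mmapXU hs_zv.
rewrite -!rmorphM -rmorphD -rmorphM; congr (_%:P).
have h2 : (2%:R : C) != 0 by rewrite pnatr_eq0.
rewrite /sv; case: (s k); case: (s' k) => /=.
- by rewrite mulr1 -mulr2n mulVf.
- by rewrite mulrN1 subrr mulr0.
- by rewrite mulN1r subrr mulr0.
- by rewrite mulrNN mulr1 -mulr2n mulVf.
Qed.

Lemma ev_delta s s' : ev s' (delta s) = ((s == s')%:R)%:P.
Proof.
rewrite /delta rmorph_prod /=.
rewrite (eq_bigr (fun k => ((s k == s' k)%:R)%:P)); last first.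
  by move=> k _; exact: ev_delta_factor.
case: (eqVneq s s') => [<-|hne].
  by rewrite big1 ?polyC1 // => k _; rewrite eqxx polyC1.
have : ~~ [forall k, s k == s' k].
  apply: contra hne => /forallP h; apply/eqP/ffunP => k; exact/eqP/h.
rewrite negb_forall => /existsP [k hk].
by rewrite (bigD1 k) //= (negbTE hk) polyC0 mul0r.
Qed.

Lemma ev_ideal s f : in_critical_ideal act W nb e pot f -> char_poly (M0 s) %| ev s f.
Proof.
case=> c0 [a [b ->]].
have E1 : ev s (\sum_(i < d) a i * euler i Phi) = 0.
  rewrite rmorph_sum big1 // => i _; rewrite rmorphM /=.
  by rewrite ev_euler mulr0.
have E2 : ev s (\sum_(i < d) b i * ('X_(zv i) * 'X_(wv i) - 1)) = 0.
  rewrite rmorph_sum big1 // => i _; rewrite rmorphM /= rmorphB /= rmorphM /= rmorph1.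
  rewrite !mmapXU hs_zv hs_wv -rmorphM.
  have -> : @sv R d s i * @sv R d s i = 1 by rewrite /sv; case: (s i); rewrite ?mulr1 ?mulrNN ?mulr1.
  by rewrite rmorph1 subrr ?mulr0.
rewrite !rmorphD /= E1 E2 !addr0 rmorphM /= ev_disp.
exact: dvdp_mull (dvdpp _).
Qed.

End Graph.

Lemma cardT (d n : nat) : #|{: ({ffun 'I_d -> bool} * 'I_n)%type}| = (2 ^ d * n)%N.
Proof. by rewrite card_prod card_ffun card_bool !card_ord. Qed.

Theorem corollary1p8 (R : realType) (d : nat) (V : Type)
    (adj : V -> V -> Prop) (act : 'rV[int]_d -> V -> V)
    (n : nat) (W : 'I_n -> V) (nb : 'I_n -> 'I_n -> seq 'rV[int]_d)
    (e : V -> V -> R) (pot : V -> R) :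
  periodic_graph adj act ->
  fundamental_domain act W ->
  neighbor_enum adj act W nb ->
  periodic_operator act e pot ->
  finitely_many_critical_points act W nb e pot ->
  critical_degree_ge act W nb e pot (2 ^ d * n).
Proof.
pose C := R[i].
move=> [hsym [_ [_ [hact0 [hactD [haut _]]]]]] _ hnb hop _.
pose g (x : ({ffun 'I_d -> bool} * 'I_n)%type) : 'I_((2 ^ d * n)%N) :=
  cast_ord (cardT d n) (enum_rank x).
pose gi (j : 'I_((2 ^ d * n)%N)) : ({ffun 'I_d -> bool} * 'I_n)%type :=
  enum_val (cast_ord (esym (cardT d n)) j).
have gK : cancel g gi by move=> x; rewrite /g /gi cast_ordK enum_rankK.
have giK : cancel gi g by move=> j; rewrite /g /gi enum_valK cast_ordKV.
exists (fun j => delta R (gi j).1 * 'X_(lv d) ^+ (gi j).2).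
move=> c hc.
suff key : forall x, c (g x) = 0 by move=> j; rewrite -(giK j) key.
case=> s t.
have hd := ev_ideal hsym hact0 hactD haut hnb hop s hc.
pose E (t' : nat) : C := if insub t' is Some o then c (g (s, o)) else 0.
have EE : forall o : 'I_n, E o = c (g (s, o)) by move=> o; rewrite /E valK.
set Q := \poly_(t' < n) E t'.
have HQ : mmap polyC (hs R s)
   (\sum_(j < (2 ^ d * n)%N) c j *: (delta R (gi j).1 * 'X_(lv d) ^+ (gi j).2)) = Q.
  rewrite (reindex g); last by apply: onW_bij; exists gi.
  rewrite (eq_bigr (fun x => c (g x) *: (delta R x.1 * 'X_(lv d) ^+ x.2)));
    last by move=> x _; rewrite gK.
  rewrite rmorph_sum /=.
  rewrite (eq_bigr (fun x => (c (g x) * (x.1 == s)%:R) *: 'X^(x.2))); last first.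
    move=> x _; rewrite (mmapZ (hs R s) (@polyC C)) rmorphM /= ev_delta rmorphXn /=.
    by rewrite mmapXU hs_lv -mul_polyC polyCM mulrA.
  pose G (a : {ffun 'I_d -> bool}) (b : 'I_n) : {poly C} := (c (g (a, b)) * (a == s)%:R) *: 'X^b.
  rewrite (eq_bigr (fun x => G x.1 x.2)); last by case.
  rewrite -(pair_bigA _ G) /= (bigD1 s) //= [X in _ + X]big1 ?addr0; last first.
    move=> s' hs'; apply: big1 => o _; rewrite /G.
    by move: hs'; case: eqP => // _ _; rewrite mulr0 scale0r.
  rewrite /Q poly_def; apply: eq_bigr => o _; rewrite /G EE.
  by case: eqP => // _; rewrite mulr1.
rewrite HQ in hd.
have Q0 : Q = 0.
  apply/eqP; apply: contraT => hQ.
  have := dvdp_leq hQ hd; rewrite size_char_poly.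
  by move/leq_trans/(_ (size_poly _ _)); rewrite ltnn.
have := congr1 (fun p : {poly C} => p`_t) Q0.
by rewrite coef_poly ltn_ord EE coef0.
Qed.
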